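(* Let $k\ge2$ be an integer and for $p>1$ define \[\psi_k(x)=\sin^p(\pi x)\Big(\frac1{(k-x)^p}+\frac1{(k+x-1)^p}\Big),\qquad x\in[1/2,1].\] Then: (i) for all $p>1$, the points $x=1/2$ and $x=1$ are abscissae of extrema of $\psi_k$; (ii) if $p>\pi^2(k-1/2)^2-1$, then $\psi_k$ attains an extremum at some point $x_k^*\in(1/2,A_k)$, where $A_k\in(1/2,1)$ is the unique solution in $(1/2,1)$ of the equation $\cot(\pi x)=-\frac{1}{\pi(k-x)}$; (iii) each $x_k^*\in(1/2,A_k)$ is the abscissa of an extremum of $\psi_k$ for exactly one value $p=\widetilde p$, namely \[\widetilde p=\frac{\ln\dfrac{1-\pi\cot(\pi x_k^* )(k+x_k^*-1)}{\pi\cot(\pi x_k^* )(k+x_k^*-1)-1+\frac{2k-1}{k-x_k^*}}}{\ln(k+x_k^*-1)-\ln(k-x_k^* )},\] and this value satisfies $\widetilde p>1$. *)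

(* Defs.v *)
From Stdlib Require Import Reals.
Open Scope R_scope.

(* Real power x^p for x >= 0, p > 0, with the convention 0^p = 0
   (Stdlib's Rpower 0 p would give 1). *)
Definition rpow (x p : R) : R := if Rle_dec x 0 then 0 else Rpower x p.

Definition cot (x : R) : R := cos x / sin x.

Definition psi (k : nat) (p x : R) : R :=
  rpow (sin (PI * x)) p * (/ rpow (INR k - x) p + / rpow (INR k + x - 1) p).

Definition is_extremum_on (a b : R) (f : R -> R) (x : R) : Prop :=
  a <= x <= b /\
  exists d, d > 0 /\
    ((forall y, a <= y <= b -> Rabs (y - x) < d -> f y <= f x) \/
     (forall y, a <= y <= b -> Rabs (y - x) < d -> f x <= f y)).

Definition A_eq (k : nat) (x : R) : Prop :=
  cot (PI * x) = - / (PI * (INR k - x)).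

Definition ptilde (k : nat) (x : R) : R :=
  ln ((1 - PI * cot (PI * x) * (INR k + x - 1)) /
      (PI * cot (PI * x) * (INR k + x - 1) - 1 + (2 * INR k - 1) / (INR k - x)))
  / (ln (INR k + x - 1) - ln (INR k - x)).

(* Main.v *)
Require Import Defs.
From Stdlib Require Import Reals Lra.
From Coquelicot Require Import Coquelicot.
Open Scope R_scope.


Definition cf x := PI * cot (PI * x).
Definition al kr x := /(kr - x) + cf x.
Definition be kr x := /(kr + x - 1) - cf x.
Definition gg kr x := al kr x * be kr x.
Definition KK kr p x := p*(ln(kr + x - 1) - ln(kr - x)) + ln(al kr x) - ln(be kr x).
Definition psi2 kr p x := exp(p*(ln(sin(PI*x)) - ln(kr - x))) + exp(p*(ln(sin(PI*x)) - ln(kr+x-1))).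
Definition QQ kr p x := exp(p*(ln(sin(PI*x)) - ln(kr - x))) * al kr x - exp(p*(ln(sin(PI*x)) - ln(kr+x-1))) * be kr x.

Lemma PI_gt3 : 3 < PI.
Proof. generalize PI2_3_2; lra. Qed.

Lemma sin_pos x : 0 < x < 1 -> 0 < sin (PI*x).
Proof. intros. apply sin_gt_0. generalize PI_RGT_0; nra. generalize PI_RGT_0; nra. Qed.

Lemma cf_deriv x : 0 < x < 1 -> is_derive cf x (-(PI^2 + cf x ^2)).
Proof.
intros H. generalize (sin_pos x H). intro. unfold cf, cot. auto_derive.
- lra.
- field. lra.
Qed.

Lemma Dcf x : 0 < x < 1 -> Derive (fun y => cf y) x = -(PI^2 + cf x ^2).
Proof. intros. apply is_derive_unique. apply cf_deriv; auto. Qed.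

Lemma ex_cf x : 0 < x < 1 -> ex_derive (fun y => cf y) x.
Proof. intros. eexists. apply cf_deriv; auto. Qed.

Lemma sin_ge_xcos y : 0 <= y <= PI/2 -> y * cos y <= sin y.
Proof.
intros [H0 H1]. destruct (Req_dec y 0) as [->|Hy].
{ rewrite sin_0; lra. }
destruct (MVT_cor2 (fun u => sin u - u * cos u) (fun u => u * sin u) 0 y) as [c [Hc1 Hc2]].
- lra.
- intros c _. apply is_derive_Reals. auto_derive; auto. ring.
- assert (0 < sin c). { apply sin_gt_0; generalize PI_RGT_0; lra. }
  rewrite sin_0, Rmult_0_l in Hc1.
  assert (0 < c * sin c) by (apply Rmult_lt_0_compat; lra). nra.
Qed.

Lemma cf_bound x : 1/2 <= x < 1 -> cf x <= - PI^2 * (x - 1/2).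
Proof.
intros H. set (y := PI*x - PI/2).
assert (Hy : 0 <= y < PI/2). { unfold y; generalize PI_RGT_0; intro; split.
  - assert (PI * (x - 1/2) >= 0) by (apply Rle_ge, Rmult_le_pos; lra). nra.
  - assert (PI * (1 - x) > 0) by (apply Rmult_lt_0_compat; lra). nra. }
assert (Hs : sin (PI*x) = cos y). { replace (PI*x) with (y + PI/2) by (unfold y; ring). rewrite sin_plus, sin_PI2, cos_PI2. ring. }
assert (Hc : cos (PI*x) = - sin y). { replace (PI*x) with (y + PI/2) by (unfold y; ring). rewrite cos_plus, sin_PI2, cos_PI2. ring. }
assert (Hcy : 0 < cos y). { apply cos_gt_0; generalize PI_RGT_0; lra. }
generalize (sin_ge_xcos y ltac:(lra)). intro Hb.
unfold cf, cot. rewrite Hs, Hc.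
replace (- PI^2 * (x - 1/2)) with (PI * (- y)) by (unfold y; field).
apply Rmult_le_compat_l. generalize PI_RGT_0; lra.
apply (Rmult_le_reg_r (cos y)); auto. unfold Rdiv. rewrite Rmult_assoc, Rinv_l by lra. lra.
Qed.

Lemma cf_half : cf (1/2) = 0.
Proof. unfold cf, cot. replace (PI * (1/2)) with (PI/2) by field. rewrite cos_PI2. field. rewrite sin_PI2; lra. Qed.


Lemma al_deriv kr x : 0 < x < 1 -> 0 < kr - x ->
  is_derive (al kr) x (/((kr-x)*(kr-x)) - (PI^2 + cf x ^2)).
Proof.
intros H Ha. unfold al. auto_derive.
- split; [lra|split; [apply ex_cf; auto|auto]].
- rewrite Dcf by auto. field. lra.
Qed.

Lemma gg_deriv kr x : 0 < x < 1 -> 0 < kr - x -> 0 < kr + x - 1 ->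
  is_derive (gg kr) x ((/((kr-x)*(kr-x)) - (PI^2 + cf x ^2)) * be kr x
                       + al kr x * (- /((kr+x-1)*(kr+x-1)) + (PI^2 + cf x ^2))).
Proof.
intros H Ha Hb. unfold gg, al, be. auto_derive.
- repeat split; try lra; try apply ex_cf; auto.
- rewrite Dcf by auto. field. lra.
Qed.

Lemma KK_deriv kr p x : 0 < x < 1 -> 0 < kr - x -> 0 < kr + x - 1 -> 0 < al kr x -> 0 < be kr x ->
  is_derive (KK kr p) x ((/(kr-x) + /(kr+x-1)) * ((p+1) - PI^2 / gg kr x)).
Proof.
intros H Ha Hb Hal Hbe. unfold KK, gg. unfold al, be in *. auto_derive.
- unfold Rminus in *. repeat split; auto; try lra; apply ex_cf; auto.
- rewrite Dcf by auto.
  assert (E1 : 1 - cf x * (kr + x - 1) = (kr+x-1) * (/ (kr + x - 1) - cf x)) by (field; lra).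
  assert (E2 : 1 + cf x * (kr - x) = (kr-x) * (/ (kr - x) + cf x)) by (field; lra).
  assert (0 < (kr+x-1) * (/ (kr + x - 1) - cf x)) by (apply Rmult_lt_0_compat; lra).
  assert (0 < (kr-x) * (/ (kr - x) + cf x)) by (apply Rmult_lt_0_compat; lra).
  field. repeat split; lra.
Qed.

Lemma psi2_deriv kr p x : 0 < x < 1 -> 0 < kr - x -> 0 < kr + x - 1 ->
  is_derive (psi2 kr p) x (p * QQ kr p x).
Proof.
intros H Ha Hb. generalize (sin_pos x H); intro Hs.
unfold psi2, QQ, al, be, cf, cot. auto_derive.
- repeat split; lra.
- unfold Rminus. field. repeat split; lra.
Qed.

Lemma QQ_ex kr p x : 0 < x < 1 -> 0 < kr - x -> 0 < kr + x - 1 ->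
  ex_derive (fun y => - QQ kr p y) x.
Proof.
intros H Ha Hb. generalize (sin_pos x H); intro Hs.
unfold QQ, al, be, cf, cot. auto_derive. repeat split; lra.
Qed.

Lemma cont_of f x : ex_derive f x -> continuity_pt f x.
Proof. intros [l Hl]. apply is_derive_Reals in Hl. apply derivable_continuous_pt. exists l; auto. Qed.

Lemma mono_incr f f' a b : a < b -> (forall c, a <= c <= b -> is_derive f c (f' c)) ->
  (forall c, a < c < b -> 0 < f' c) -> f a < f b.
Proof.
intros Hab Hd Hp. destruct (MVT_cor2 f f' a b Hab) as [c [E Hc]].
- intros; apply is_derive_Reals; auto.
- assert (0 < f' c) by auto. nra.
Qed.

Lemma mono_decr f f' a b : a < b -> (forall c, a <= c <= b -> is_derive f c (f' c)) ->
  (forall c, a < c < b -> f' c < 0) -> f b < f a.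
Proof.
intros Hab Hd Hp. destruct (MVT_cor2 f f' a b Hab) as [c [E Hc]].
- intros; apply is_derive_Reals; auto.
- assert (f' c < 0) by auto. nra.
Qed.


Lemma al_decr kr y z : 2 <= kr -> 0 < y < z -> z < 1 -> al kr z < al kr y.
Proof.
intros Hk Hy Hz.
apply (mono_decr (al kr) (fun x => /((kr-x)*(kr-x)) - (PI^2 + cf x ^2))); [lra| |].
- intros c Hc. apply al_deriv; lra.
- intros c Hc. assert (1 <= kr - c) by lra.
  assert (/((kr-c)*(kr-c)) <= 1).
  { rewrite <- Rinv_1. apply Rinv_le_contravar; nra. }
  generalize PI_gt3; intro. nra.
Qed.

Lemma al_half kr : 2 <= kr -> 0 < al kr (1/2).
Proof. intros. unfold al. rewrite cf_half, Rplus_0_r. apply Rinv_0_lt_compat. lra. Qed.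

Lemma al_34 kr : 2 <= kr -> al kr (3/4) < 0.
Proof.
intros Hk. unfold al. generalize (cf_bound (3/4) ltac:(lra)); intro Hc.
generalize PI_gt3; intro Hp.
assert (/(kr - 3/4) <= 4/5).
{ replace (4/5) with (/(5/4)) by field. apply Rinv_le_contravar; lra. }
nra.
Qed.

Definition isA kr A := 1/2 < A < 3/4 /\ al kr A = 0.

Lemma existsA kr : 2 <= kr -> { A | isA kr A }.
Proof.
intros Hk.
destruct (Ranalysis5.IVT_interv (fun y => - al kr y) (1/2) (3/4)) as [A [HA1 HA2]].
- intros a Ha. apply cont_of. apply (ex_derive_opp (fun y => al kr y)). eexists. apply al_deriv; lra.
- lra.
- generalize (al_half kr Hk); lra.
- generalize (al_34 kr Hk); lra.
- exists A. split; [|lra].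
  destruct (Req_dec A (1/2)) as [E|E]. { subst. generalize (al_half kr Hk); lra. }
  destruct (Req_dec A (3/4)) as [E'|E']. { subst. generalize (al_34 kr Hk); lra. }
  lra.
Qed.

Lemma al_pos kr A y : 2 <= kr -> isA kr A -> 1/2 <= y < A -> 0 < al kr y.
Proof. intros Hk [HA HA0] Hy. rewrite <- HA0. apply al_decr; lra. Qed.

Lemma al_neg kr A y : 2 <= kr -> isA kr A -> A < y < 1 -> al kr y < 0.
Proof. intros Hk [HA HA0] Hy. rewrite <- HA0. apply al_decr; lra. Qed.

Lemma be_pos kr y : 2 <= kr -> 1/2 <= y < 1 -> 0 < be kr y.
Proof.
intros Hk Hy. unfold be. generalize (cf_bound y Hy); intro Hc.
assert (0 < kr + y - 1) by lra. apply Rinv_0_lt_compat in H.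
generalize PI_gt3; intro. assert (0 <= PI^2 * (y - 1/2)) by (apply Rmult_le_pos; nra). lra.
Qed.

Lemma gg_dneg kr x : 2 <= kr -> 1/2 < x < 3/4 ->
  (/((kr-x)*(kr-x)) - (PI^2 + cf x ^2)) * be kr x
  + al kr x * (- /((kr+x-1)*(kr+x-1)) + (PI^2 + cf x ^2)) < 0.
Proof.
intros Hk Hx. unfold al, be.
set (a := kr - x). set (b := kr + x - 1). set (c := cf x).
assert (Ha : 5/4 <= a) by (unfold a; lra).
assert (Hb : 3/2 <= b) by (unfold b; lra).
set (t := x - 1/2).
assert (Ht : 0 < t < 1/4) by (unfold t; lra).
assert (Hba : b - a = 2 * t) by (unfold a, b, t; lra).
generalize (cf_bound x ltac:(lra)); fold c; intro Hc.
generalize PI_gt3; intro Hpi.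
assert (Hw : 9 < PI^2) by nra.
set (T := - c).
assert (HT : 9 * t <= T). { unfold T. assert (PI^2 * t >= 9 * t) by nra. fold t in Hc. nra. }
set (P := PI^2 + c^2).
assert (HP : 9 <= P) by (unfold P; nra).
replace ((/ (a * a) - P) * (/ b - c) + (/ a + c) * (- / (b * b) + P))
  with (((b-a) - c*(a*a+b*b) + P*(a*b)*(2*c*(a*b) + (b - a))) / ((a*b)*(a*b)))
  by (unfold P; field; lra).
assert (Hq : 15/8 <= a*b) by nra.
set (q := a*b) in *.
assert (Hab2 : a*a + b*b = (b-a)*(b-a) + 2*q) by (unfold q; ring).
assert (Num : (b-a) - c*(a*a+b*b) + P*q*(2*c*q + (b - a)) = 2*t + T*(2*t*(2*t) + 2*q) - P*q*(2*T*q - 2*t)).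
{ rewrite Hab2, Hba. unfold T. ring. }
rewrite Num.
assert (N : 2*t + T*(2*t*(2*t) + 2*q) - P*q*(2*T*q - 2*t) < 0).
{ assert (h2 : 2*T*q - 2*t >= 2*T*(q - 1/9)) by nra.
  assert (h2' : 0 <= 2*T*(q - 1/9)) by nra.
  assert (h3 : P*q*(2*T*q - 2*t) >= 9*q*(2*T*(q - 1/9))).
  { apply Rle_ge. apply Rmult_le_compat; nra. }
  assert (h4 : 2*t*(2*t) <= 1/4) by nra.
  assert (0 < T) by lra.
  assert (T*(2*t*(2*t) + 2*q) <= T*(1/4 + 2*q)) by (apply Rmult_le_compat_l; lra).
  assert (2/9 + 1/4 + 2*q - 18*q*q + 2*q < 0) by nra.
  assert (T * (2/9 + 1/4 + 2*q - 18*q*q + 2*q) < 0) by nra.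
  nra. }
assert (0 < /(q*q)) by (apply Rinv_0_lt_compat; nra).
unfold Rdiv. nra.
Qed.


Lemma gg_decr kr y z : 2 <= kr -> 1/2 <= y < z -> z <= 3/4 -> gg kr z < gg kr y.
Proof.
intros Hk Hy Hz.
eapply mono_decr; [lra| |].
- intros c Hc. apply gg_deriv; lra.
- intros c Hc. apply gg_dneg; lra.
Qed.

Lemma KK_half kr p : 2 <= kr -> KK kr p (1/2) = 0.
Proof.
intros. unfold KK, al, be. rewrite cf_half.
replace (kr + 1/2 - 1) with (kr - 1/2) by field. rewrite Rplus_0_r, Rminus_0_r. ring.
Qed.

Lemma gg_half kr : gg kr (1/2) = /(kr - 1/2) * /(kr - 1/2).
Proof.
unfold gg, al, be. rewrite cf_half. replace (kr + 1/2 - 1) with (kr - 1/2) by field. ring.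
Qed.

Lemma gg_pos kr A y : 2 <= kr -> isA kr A -> 1/2 <= y < A -> 0 < gg kr y.
Proof.
intros Hk HA Hy. unfold gg. apply Rmult_lt_0_compat.
- eapply al_pos; eauto.
- apply be_pos; destruct HA; lra.
Qed.

Lemma div_swap_lt w u v : 0 < u -> 0 < v -> w / v < u -> w / u < v.
Proof.
intros Hu Hv H. apply (Rmult_lt_compat_r v) in H; auto.
unfold Rdiv in *. rewrite Rmult_assoc, Rinv_l in H by lra.
apply (Rmult_lt_reg_r u); auto. rewrite Rmult_assoc, Rinv_l by lra. lra.
Qed.

Lemma div_swap_gt w u v : 0 < u -> 0 < v -> u < w / v -> v < w / u.
Proof.
intros Hu Hv H. apply (Rmult_lt_compat_r v) in H; auto.
unfold Rdiv in *. rewrite Rmult_assoc, Rinv_l in H by lra.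
apply (Rmult_lt_reg_r u); auto. rewrite Rmult_assoc, Rinv_l by lra. lra.
Qed.

Lemma KK_d kr A p c : 2 <= kr -> isA kr A -> 1/2 <= c < A ->
  is_derive (KK kr p) c ((/(kr-c) + /(kr+c-1)) * ((p+1) - PI^2 / gg kr c)).
Proof.
intros Hk HA Hc. destruct HA as [HA1 HA2].
apply KK_deriv; try lra.
- eapply al_pos; eauto. split; eauto.
- apply be_pos; lra.
Qed.

Lemma SL_a kr A p y z : 2 <= kr -> isA kr A -> 0 < p -> 1/2 <= y < z -> z < A ->
  PI^2/(p+1) <= gg kr z -> KK kr p y < KK kr p z.
Proof.
intros Hk HA Hp Hy Hz Hg. generalize HA; intros [HA1 HA2].
eapply mono_incr; [lra| |].
- intros c Hc. apply (KK_d kr A); auto; lra.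
- intros c Hc. simpl.
  assert (gg kr z < gg kr c) by (apply gg_decr; lra).
  assert (0 < gg kr c) by (eapply gg_pos; eauto; lra).
  assert (PI^2 / gg kr c < p + 1).
  { apply div_swap_lt; try lra. }
  assert (0 < /(kr-c)) by (apply Rinv_0_lt_compat; lra).
  assert (0 < /(kr+c-1)) by (apply Rinv_0_lt_compat; lra).
  apply Rmult_lt_0_compat; lra.
Qed.

Lemma SL_b kr A p y z : 2 <= kr -> isA kr A -> 0 < p -> 1/2 <= y < z -> z < A ->
  gg kr y <= PI^2/(p+1) -> KK kr p z < KK kr p y.
Proof.
intros Hk HA Hp Hy Hz Hg. generalize HA; intros [HA1 HA2].
eapply mono_decr; [lra| |].
- intros c Hc. apply (KK_d kr A); auto; lra.
- intros c Hc. simpl.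
  assert (gg kr c < gg kr y) by (apply gg_decr; lra).
  assert (0 < gg kr c) by (eapply gg_pos; eauto; lra).
  assert (p + 1 < PI^2 / gg kr c).
  { apply div_swap_gt; try lra. }
  assert (0 < /(kr-c)) by (apply Rinv_0_lt_compat; lra).
  assert (0 < /(kr+c-1)) by (apply Rinv_0_lt_compat; lra).
  assert (0 < /(kr-c) + /(kr+c-1)) by lra. nra.
Qed.

Lemma Ksign kr A p x0 : 2 <= kr -> isA kr A -> 0 < p -> 1/2 < x0 < A -> KK kr p x0 = 0 ->
  (forall y, 1/2 < y < x0 -> 0 < KK kr p y) /\ (forall y, x0 < y < A -> KK kr p y < 0).
Proof.
intros Hk HA Hp Hx0 HK.
destruct (Rle_dec (PI^2/(p+1)) (gg kr x0)) as [Hg|Hg].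
{ exfalso. generalize (SL_a kr A p (1/2) x0 Hk HA Hp ltac:(lra) ltac:(lra) Hg).
  rewrite KK_half by auto. lra. }
split.
- intros y Hy. destruct (Rle_dec (PI^2/(p+1)) (gg kr y)) as [Hg'|Hg'].
  + generalize (SL_a kr A p (1/2) y Hk HA Hp ltac:(lra) ltac:(lra) Hg').
    rewrite KK_half by auto. lra.
  + generalize (SL_b kr A p y x0 Hk HA Hp ltac:(lra) ltac:(lra) ltac:(lra)). lra.
- intros y Hy. generalize (SL_b kr A p x0 y Hk HA Hp ltac:(lra) ltac:(lra) ltac:(lra)). lra.
Qed.

Lemma QQ_exp kr p x : 0 < x < 1 -> 2 <= kr -> 0 < al kr x -> 0 < be kr x ->
  QQ kr p x = exp (p*(ln(sin(PI*x)) - ln(kr - x)) + ln (al kr x))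
            - exp (p*(ln(sin(PI*x)) - ln(kr+x-1)) + ln (be kr x)).
Proof.
intros. unfold QQ. rewrite !exp_plus, !exp_ln by auto. ring.
Qed.

Lemma QK_diff kr p x :
  (p*(ln(sin(PI*x)) - ln(kr - x)) + ln (al kr x)) - (p*(ln(sin(PI*x)) - ln(kr+x-1)) + ln (be kr x))
  = KK kr p x.
Proof. unfold KK. ring. Qed.

Lemma QK_pos kr p x : 0 < x < 1 -> 2 <= kr -> 0 < al kr x -> 0 < be kr x ->
  0 < KK kr p x -> 0 < QQ kr p x.
Proof.
intros. rewrite QQ_exp by auto. rewrite <- QK_diff in H3.
assert (exp (p * (ln (sin (PI * x)) - ln (kr + x - 1)) + ln (be kr x)) <
        exp (p * (ln (sin (PI * x)) - ln (kr - x)) + ln (al kr x))) by (apply exp_increasing; lra).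
lra.
Qed.

Lemma QK_neg kr p x : 0 < x < 1 -> 2 <= kr -> 0 < al kr x -> 0 < be kr x ->
  KK kr p x < 0 -> QQ kr p x < 0.
Proof.
intros. rewrite QQ_exp by auto. rewrite <- QK_diff in H3.
assert (exp (p * (ln (sin (PI * x)) - ln (kr - x)) + ln (al kr x)) <
        exp (p * (ln (sin (PI * x)) - ln (kr + x - 1)) + ln (be kr x))) by (apply exp_increasing; lra).
lra.
Qed.

Lemma QK_zero kr p x : 0 < x < 1 -> 2 <= kr -> 0 < al kr x -> 0 < be kr x ->
  QQ kr p x = 0 -> KK kr p x = 0.
Proof.
intros. rewrite QQ_exp in H3 by auto. rewrite <- QK_diff.
assert (E : exp (p * (ln (sin (PI * x)) - ln (kr - x)) + ln (al kr x)) =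
        exp (p * (ln (sin (PI * x)) - ln (kr + x - 1)) + ln (be kr x))) by lra.
apply exp_inv in E. lra.
Qed.

Lemma QQ_tail kr p x : 1/2 <= x < 1 -> 2 <= kr -> al kr x <= 0 -> QQ kr p x < 0.
Proof.
intros. unfold QQ. generalize (be_pos kr x H0 H); intro.
assert (0 < exp (p * (ln (sin (PI * x)) - ln (kr - x)))) by apply exp_pos.
assert (0 < exp (p * (ln (sin (PI * x)) - ln (kr + x - 1)))) by apply exp_pos.
nra.
Qed.


Lemma psi_eq k p y : 2 <= INR k -> 0 < y < 1 -> psi k p y = psi2 (INR k) p y.
Proof.
intros Hk Hy. generalize (sin_pos y Hy); intro Hs.
unfold psi, psi2, rpow.
destruct (Rle_dec (sin (PI*y)) 0); [lra|].
destruct (Rle_dec (INR k - y) 0); [lra|].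
destruct (Rle_dec (INR k + y - 1) 0); [lra|].
unfold Rpower.
replace (p * (ln (sin (PI * y)) - ln (INR k - y))) with (p * ln (sin (PI * y)) + - (p * ln (INR k - y))) by ring.
replace (p * (ln (sin (PI * y)) - ln (INR k + y - 1))) with (p * ln (sin (PI * y)) + - (p * ln (INR k + y - 1))) by ring.
rewrite !exp_plus, !exp_Ropp. ring.
Qed.

Lemma psi_1 k p : psi k p 1 = 0.
Proof.
unfold psi, rpow. rewrite Rmult_1_r, sin_PI.
destruct (Rle_dec 0 0); [ring|lra].
Qed.

Lemma rpow_nonneg x p : 0 <= rpow x p.
Proof. unfold rpow. destruct (Rle_dec x 0); [lra|]. unfold Rpower. left; apply exp_pos. Qed.

Lemma rpow_pos x p : 0 < x -> 0 < rpow x p.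
Proof. intros. unfold rpow. destruct (Rle_dec x 0); [lra|]. unfold Rpower. apply exp_pos. Qed.

Lemma psi_nonneg k p y : 2 <= INR k -> 1/2 <= y <= 1 -> 0 <= psi k p y.
Proof.
intros. unfold psi. apply Rmult_le_pos. apply rpow_nonneg.
assert (0 < / rpow (INR k - y) p) by (apply Rinv_0_lt_compat, rpow_pos; lra).
assert (0 < / rpow (INR k + y - 1) p) by (apply Rinv_0_lt_compat, rpow_pos; lra).
lra.
Qed.

Lemma psi2_pos kr p y : 0 < psi2 kr p y.
Proof. unfold psi2. generalize (exp_pos (p * (ln (sin (PI * y)) - ln (kr - y)))) (exp_pos (p * (ln (sin (PI * y)) - ln (kr + y - 1)))). lra. Qed.

Lemma ptilde_rel k A p x : 2 <= INR k -> isA (INR k) A -> 1/2 < x < A ->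
  0 < ln (INR k + x - 1) - ln (INR k - x) /\
  KK (INR k) p x = (p - ptilde k x) * (ln (INR k + x - 1) - ln (INR k - x)).
Proof.
intros Hk HA Hx. generalize HA; intros [HA1 HA2]. set (kr := INR k) in *.
assert (HD : 0 < ln (kr + x - 1) - ln (kr - x)).
{ assert (ln (kr - x) < ln (kr + x - 1)) by (apply ln_increasing; lra). lra. }
split; auto.
assert (Hal : 0 < al kr x) by (apply (al_pos kr A x Hk HA); lra).
assert (Hbe : 0 < be kr x) by (apply be_pos; destruct HA; lra).
unfold ptilde. fold kr. fold (cf x).
assert (E1 : 1 - cf x * (kr + x - 1) = (kr + x - 1) * be kr x) by (unfold be; field; lra).
assert (E2 : cf x * (kr + x - 1) - 1 + (2 * kr - 1) / (kr - x) = (kr + x - 1) * al kr x)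
  by (unfold al; field; lra).
rewrite E1, E2.
replace ((kr + x - 1) * be kr x / ((kr + x - 1) * al kr x)) with (be kr x * / al kr x)
  by (field; lra).
rewrite ln_mult, ln_Rinv; try lra; [|apply Rinv_0_lt_compat; lra].
unfold KK. field. lra.
Qed.

Lemma psi2_d k p c : 2 <= INR k -> 0 < c < 1 -> is_derive (psi2 (INR k) p) c (p * QQ (INR k) p c).
Proof. intros. apply psi2_deriv; lra. Qed.

Lemma EXT k A p x0 : 2 <= INR k -> isA (INR k) A -> 0 < p -> 1/2 < x0 < A -> KK (INR k) p x0 = 0 ->
  is_extremum_on (1/2) 1 (psi k p) x0.
Proof.
intros Hk HA Hp Hx HK. generalize HA; intros [HA1 HA2].
destruct (Ksign (INR k) A p x0 Hk HA Hp Hx HK) as [Hl Hr].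
split; [lra|]. exists 1. split; [lra|]. left. intros y Hy _.
destruct (Rlt_le_dec y x0) as [H1|H1].
- rewrite !psi_eq by (auto; lra). left.
  apply (mono_incr _ (fun c => p * QQ (INR k) p c)); [lra| |].
  + intros c Hc. apply psi2_d; auto; lra.
  + intros c Hc. apply Rmult_lt_0_compat; auto. apply QK_pos; try lra.
    * eapply al_pos; eauto; lra.
    * apply be_pos; lra.
    * apply Hl; lra.
- destruct (Req_dec y x0) as [->|H2]; [lra|].
  destruct (Req_dec y 1) as [->|H3].
  { rewrite psi_1. apply psi_nonneg; lra. }
  rewrite !psi_eq by (auto; lra). left.
  apply (mono_decr _ (fun c => p * QQ (INR k) p c)); [lra| |].
  + intros c Hc. apply psi2_d; auto; lra.
  + intros c Hc. assert (QQ (INR k) p c < 0).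
    { destruct (Rlt_le_dec c A) as [H4|H4].
      - apply QK_neg; try lra.
        + eapply al_pos; eauto; lra.
        + apply be_pos; lra.
        + apply Hr; lra.
      - apply QQ_tail; try lra. destruct (Req_dec c A) as [->|H5]; [lra|].
        left. eapply al_neg; eauto; lra. }
    nra.
Qed.

Lemma FERMAT k A p x0 : 2 <= INR k -> isA (INR k) A -> 0 < p -> 1/2 < x0 < A ->
  is_extremum_on (1/2) 1 (psi k p) x0 -> QQ (INR k) p x0 = 0.
Proof.
intros Hk HA Hp Hx [_ [d [Hd Hm]]]. generalize HA; intros [HA1 HA2].
set (lo := Rmax (1/2) (x0 - d)). set (hi := Rmin 1 (x0 + d)).
assert (Hlo : lo < x0) by (unfold lo; apply Rmax_Rlt; lra).
assert (Hhi : x0 < hi) by (unfold hi; apply Rmin_Rgt; lra).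
assert (Hin : forall y, lo < y -> y < hi -> 1/2 < y < 1 /\ Rabs (y - x0) < d).
{ intros y H1 H2. unfold lo, hi in *. apply Rmax_Rlt in H1. apply Rmin_Rgt in H2.
  split; [lra|]. apply Rabs_def1; lra. }
assert (Hder : derivable_pt_lim (psi2 (INR k) p) x0 (p * QQ (INR k) p x0)).
{ apply is_derive_Reals. apply psi2_d; auto; lra. }
set (pr := exist (fun l => derivable_pt_lim (psi2 (INR k) p) x0 l) _ Hder : derivable_pt (psi2 (INR k) p) x0).
assert (E : derive_pt (psi2 (INR k) p) x0 pr = p * QQ (INR k) p x0) by (apply derive_pt_eq_0; auto).
destruct Hm as [Hm|Hm].
- assert (Z := deriv_maximum (psi2 (INR k) p) lo hi x0 pr Hlo Hhi).
  rewrite E in Z.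
  assert (p * QQ (INR k) p x0 = 0).
  { apply Z. intros y H1 H2. destruct (Hin y H1 H2) as [Hy Hy'].
    rewrite <- !psi_eq by (auto; lra). apply Hm; auto; lra. }
  apply Rmult_integral in H. destruct H; lra.
- assert (Z := deriv_minimum (psi2 (INR k) p) lo hi x0 pr Hlo Hhi).
  rewrite E in Z.
  assert (p * QQ (INR k) p x0 = 0).
  { apply Z. intros y H1 H2. destruct (Hin y H1 H2) as [Hy Hy'].
    rewrite <- !psi_eq by (auto; lra). apply Hm; auto; lra. }
  apply Rmult_integral in H. destruct H; lra.
Qed.


Lemma near_half kr L B : 2 <= kr -> L < gg kr (1/2) -> 1/2 < B ->
  exists z, 1/2 < z < B /\ L <= gg kr z.
Proof.
intros Hk HL HB.
assert (C : continuity_pt (gg kr) (1/2)).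
{ apply cont_of. eexists. apply gg_deriv; lra. }
unfold continuity_pt, continue_in, limit1_in, limit_in in C.
destruct (C (gg kr (1/2) - L)) as [alp [Halp H]]; [lra|].
set (z := Rmin (1/2 + alp/2) ((1/2 + B)/2)).
assert (Hz1 : z <= 1/2 + alp/2) by apply Rmin_l.
assert (Hz2 : z <= (1/2 + B)/2) by apply Rmin_r.
assert (Hz3 : z > 1/2) by (unfold z; apply Rmin_Rgt; lra).
exists z. split; [lra|].
assert (Hd : R_dist (gg kr z) (gg kr (1/2)) < gg kr (1/2) - L).
{ apply H. split. { split; [exact I|lra]. } unfold R_dist. apply Rabs_def1; lra. }
unfold R_dist in Hd. apply Rabs_def2 in Hd. lra.
Qed.

Theorem lemma4 (k : nat) (hk : (2 <= k)%nat) :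
  (forall p : R, 1 < p ->
     is_extremum_on (1/2) 1 (psi k p) (1/2) /\
     is_extremum_on (1/2) 1 (psi k p) 1) /\
  exists A : R,
    1/2 < A < 1 /\ A_eq k A /\
    (forall B : R, 1/2 < B < 1 -> A_eq k B -> B = A) /\
    (forall p : R, 1 < p -> PI ^ 2 * (INR k - 1/2) ^ 2 - 1 < p ->
       exists x : R, 1/2 < x < A /\ is_extremum_on (1/2) 1 (psi k p) x) /\
    (forall x : R, 1/2 < x < A ->
       1 < ptilde k x /\
       (forall p : R, 1 < p ->
          (is_extremum_on (1/2) 1 (psi k p) x <-> p = ptilde k x))).
Proof.
assert (Hk : 2 <= INR k).
{ apply le_INR in hk. simpl in hk. lra. }
destruct (existsA (INR k) Hk) as [A HA]. generalize HA; intros [HA1 HA2].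
set (kr := INR k) in *. assert (Hk2 : 2 <= INR k) by exact Hk.
assert (Hm1 : /(kr - 1/2) <= 2/3).
{ replace (2/3) with (/(3/2)) by field. apply Rinv_le_contravar; lra. }
assert (Hm0 : 0 < /(kr - 1/2)) by (apply Rinv_0_lt_compat; lra).
generalize PI_gt3; intro Hpi.
split.
{ intros p Hp. split.
  - destruct (Rle_dec (gg kr (1/2)) (PI^2/(p+1))) as [Hg|Hg].
    + split; [lra|]. exists 1. split; [lra|]. left. intros y Hy _.
      destruct (Req_dec y (1/2)) as [->|H1]; [lra|].
      destruct (Req_dec y 1) as [->|H2].
      { rewrite psi_1. apply psi_nonneg; [exact Hk|lra]. }
      rewrite !psi_eq by (auto; lra). left.
      apply (mono_decr _ (fun c => p * QQ kr p c)); [lra| |].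
      * intros c Hc. apply psi2_d; auto; lra.
      * intros c Hc. assert (QQ kr p c < 0).
        { destruct (Rlt_le_dec c A) as [H4|H4].
          - apply QK_neg; try lra.
            + apply (al_pos kr A c Hk HA); lra.
            + apply be_pos; lra.
            + generalize (SL_b kr A p (1/2) c Hk HA ltac:(lra) ltac:(lra) ltac:(lra) Hg).
              rewrite KK_half by auto. lra.
          - apply QQ_tail; try lra. destruct (Req_dec c A) as [->|H5]; [lra|].
            left. apply (al_neg kr A c Hk HA); lra. }
        nra.
    + destruct (near_half kr (PI^2/(p+1)) A Hk ltac:(lra) ltac:(lra)) as [z [Hz Hgz]].
      split; [lra|]. exists (z - 1/2). split; [lra|]. right. intros y Hy Hyd.
      apply Rabs_def2 in Hyd.
      destruct (Req_dec y (1/2)) as [->|H1]; [lra|].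
      rewrite !psi_eq by (auto; lra). left.
      apply (mono_incr _ (fun c => p * QQ kr p c)); [lra| |].
      * intros c Hc. apply psi2_d; auto; lra.
      * intros c Hc. apply Rmult_lt_0_compat; [lra|]. apply QK_pos; try lra.
        -- apply (al_pos kr A c Hk HA); lra.
        -- apply be_pos; lra.
        -- assert (gg kr z < gg kr c) by (apply gg_decr; lra).
           generalize (SL_a kr A p (1/2) c Hk HA ltac:(lra) ltac:(lra) ltac:(lra) ltac:(lra)).
           rewrite KK_half by auto. lra.
  - split; [lra|]. exists 1. split; [lra|]. right. intros y Hy _.
    rewrite psi_1. apply psi_nonneg; [exact Hk|lra]. }
exists A. split; [lra|]. split.
{ unfold A_eq. unfold al, cf in HA2. fold kr.
  replace (cot (PI * A)) with ((PI * cot (PI * A)) / PI) by (field; lra).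
  replace (PI * cot (PI * A)) with (- / (kr - A)) by lra.
  field. lra. }
split.
{ intros B HB HBe. unfold A_eq in HBe. fold kr in HBe.
  assert (HalB : al kr B = 0).
  { unfold al, cf. rewrite HBe. field. lra. }
  destruct (Rtotal_order B A) as [H1|[H1|H1]]; auto.
  - assert (0 < al kr B) by (apply (al_pos kr A B Hk HA); lra). lra.
  - assert (al kr B < 0) by (apply (al_neg kr A B Hk HA); lra). lra. }
split.
{ intros p Hp Hth. fold kr in Hth.
  assert (HL : PI^2/(p+1) < gg kr (1/2)).
  { rewrite gg_half. set (m := kr - 1/2) in *.
    assert (0 < m) by (unfold m; lra).
    assert (PI^2 * (m*m) < p+1) by nra.
    apply (Rmult_lt_reg_r ((p+1)*(m*m))); [nra|].
    replace (PI^2/(p+1) * ((p+1)*(m*m))) with (PI^2*(m*m)) by (field; lra).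
    replace (/m*/m * ((p+1)*(m*m))) with (p+1) by (field; lra). lra. }
  destruct (near_half kr (PI^2/(p+1)) A Hk HL ltac:(lra)) as [z [Hz Hgz]].
  assert (Qz : 0 < QQ kr p z).
  { apply QK_pos; try lra.
    - apply (al_pos kr A z Hk HA); lra.
    - apply be_pos; lra.
    - generalize (SL_a kr A p (1/2) z Hk HA ltac:(lra) ltac:(lra) ltac:(lra) Hgz).
      rewrite KK_half by auto. lra. }
  assert (QA : QQ kr p A < 0) by (apply QQ_tail; lra).
  destruct (Ranalysis5.IVT_interv (fun y => - QQ kr p y) z A) as [x0 [Hx0 Hx0']].
  - intros a Ha. apply cont_of. apply QQ_ex; lra.
  - lra.
  - lra.
  - lra.
  - assert (x0 <> z) by (intro; subst; lra).
    assert (x0 <> A) by (intro; subst; lra).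
    exists x0. split; [lra|].
    apply (EXT k A p x0 Hk HA ltac:(lra) ltac:(lra)).
    apply QK_zero; try lra.
    + apply (al_pos kr A x0 Hk HA); lra.
    + apply be_pos; lra.
    + fold kr; lra. }
intros x Hx. split.
{ destruct (ptilde_rel k A 1 x Hk HA Hx) as [HD E1].
  assert (Hg : gg kr (1/2) <= PI^2/(1+1)).
  { rewrite gg_half. assert (/(kr-1/2) * /(kr-1/2) <= 4/9) by nra.
    assert (9/2 < PI^2/(1+1)) by (unfold Rdiv; nra). lra. }
  generalize (SL_b kr A 1 (1/2) x Hk HA ltac:(lra) ltac:(lra) ltac:(lra) Hg).
  rewrite KK_half by auto. fold kr in E1, HD. rewrite E1. intro. nra. }
intros p Hp. destruct (ptilde_rel k A p x Hk HA Hx) as [HD E]. fold kr in E, HD. split.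
- intro Hext. assert (Q0 := FERMAT k A p x Hk HA ltac:(lra) Hx Hext). fold kr in Q0.
  assert (K0 : KK kr p x = 0).
  { apply QK_zero; try lra.
    - apply (al_pos kr A x Hk HA); lra.
    - apply be_pos; lra. }
  rewrite E in K0. apply Rmult_integral in K0. destruct K0; lra.
- intro Heq. apply (EXT k A p x Hk HA ltac:(lra) Hx). fold kr. rewrite E, Heq. ring.
Qed.
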